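(* Let $p>2$, let $\mathcal G$ be a regular single-knot metric graph of length $\ell$ with $H$ half-lines, $P$ pendants, $L$ loops ($P+L\ge1$), and let $u$ be a positive core-symmetric bound-state. Then there exists $y>0$ such that: 1. for each half-line $h$, either $u_h(x)=\varphi(x+y)$ for all $x\ge0$ or $u_h(x)=\varphi(x-y)$ for all $x\ge0$; 2. letting $H^+$ ($H^-$) be the number of half-lines with the first (second) alternative, $\theta=\frac{H^+-H^-}{P+2L}$, and $z=\varphi(y)\in\big(0,(p/2)^{1/(p-2)}\big)$, every compact edge $\kappa$ satisfies \[ -u_\kappa''+u_\kappa=u_\kappa^{p-1}\text{ in }[0,\ell],\quad u_\kappa(0)=z,\quad u_\kappa'(0)=\theta\sqrt{2f(z)},\quad u_\kappa'(\ell)=0, \] and in particular $-\frac12(u_\kappa')^2+f(u_\kappa)\equiv(1-\theta^2)f(z)$ on $[0,\ell]$.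
   Context: A single-knot metric graph consists of $H\ge1$ half-lines, $P\ge0$ pendants and $L\ge0$ loops attached at a common vertex $\mathbf 0$; regular of length $\ell$: pendants of length $\ell$, loops of length $2\ell$. Convention: a dummy vertex at the midpoint of each loop, so all compact edges have length $\ell$, identified with $[0,\ell]$ with $\mathbf 0$ at $x=0$; half-lines identified with $[0,\infty)$, $\mathbf 0$ at $x=0$. A bound-state is a nontrivial $u\in H^1(\mathcal G)$ solving $-u''+u=|u|^{p-2}u$ on each edge with Neumann–Kirchhoff conditions (sum of inward derivatives at each vertex vanishes). Core-symmetric: restrictions to all compact edges coincide. $f(x)=\frac12x^2-\frac1p|x|^p$, and $\varphi(x)=(p/2)^{1/(p-2)}\operatorname{sech}^{2/(p-2)}\big(\frac{p-2}{2}x\big)$. *)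

(* Defs.v *)
From Stdlib Require Import Reals Lra List.
From Coquelicot Require Import Coquelicot.
Import ListNotations.
Open Scope R_scope.

Definition rpow (x a : R) : R := if Rle_dec x 0 then 0 else Rpower x a.

Definition nl (p x : R) : R := rpow (Rabs x) (p - 2) * x.

Definition fF (p x : R) : R := x ^ 2 / 2 - rpow (Rabs x) p / p.

Definition phi (p x : R) : R :=
  Rpower (p / 2) (1 / (p - 2)) * Rpower (/ cosh ((p - 2) / 2 * x)) (2 / (p - 2)).

(* Edges of a single-knot graph: half-lines, pendants, and the two halves of
   each loop (dummy vertex at the loop midpoint). Every edge is parametrised
   with the knot 0 at x = 0; compact edges are [0, ell]. *)
Inductive edge : Type :=
| Half (i : nat)
| Pend (i : nat)
| LoopE (j : nat) (b : bool).

Definition edge_valid (H P L : nat) (e : edge) : Prop :=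
  match e with
  | Half i => (i < H)%nat
  | Pend i => (i < P)%nat
  | LoopE j _ => (j < L)%nat
  end.

Definition is_compact (e : edge) : Prop :=
  match e with Half _ => False | _ => True end.

Definition edge_dom (ell : R) (e : edge) (x : R) : Prop :=
  match e with
  | Half _ => 0 <= x
  | _ => 0 <= x <= ell
  end.

Definition rsum (n : nat) (f : nat -> R) : R := fold_right Rplus 0 (map f (seq 0 n)).

Definition solves_ode (p : R) (v : R -> R) (x : R) : Prop :=
  ex_derive v x /\ ex_derive (Derive v) x /\
  - Derive (Derive v) x + v x = nl p (v x).

Definition is_bound_state (p ell : R) (H P L : nat) (u : edge -> R -> R) : Prop :=
  (forall e x, edge_valid H P L e -> edge_dom ell e x -> solves_ode p (u e) x) /\
  (forall i, (i < H)%nat ->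
     ex_RInt_gen (fun x => (u (Half i) x) ^ 2) (at_point 0) (Rbar_locally p_infty) /\
     ex_RInt_gen (fun x => (Derive (u (Half i)) x) ^ 2) (at_point 0) (Rbar_locally p_infty)) /\
  (forall e1 e2, edge_valid H P L e1 -> edge_valid H P L e2 -> u e1 0 = u e2 0) /\
  (rsum H (fun i => Derive (u (Half i)) 0) + rsum P (fun i => Derive (u (Pend i)) 0)
   + rsum L (fun j => Derive (u (LoopE j false)) 0 + Derive (u (LoopE j true)) 0) = 0) /\
  (forall i, (i < P)%nat -> Derive (u (Pend i)) ell = 0) /\
  (* continuity and Kirchhoff at loop midpoints *)
  (forall j, (j < L)%nat ->
     u (LoopE j false) ell = u (LoopE j true) ell /\
     Derive (u (LoopE j false)) ell + Derive (u (LoopE j true)) ell = 0) /\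
  (exists e x, edge_valid H P L e /\ edge_dom ell e x /\ u e x <> 0).

Definition is_positive (ell : R) (H P L : nat) (u : edge -> R -> R) : Prop :=
  forall e x, edge_valid H P L e -> edge_dom ell e x -> 0 < u e x.

Definition core_symmetric (ell : R) (H P L : nat) (u : edge -> R -> R) : Prop :=
  forall e1 e2, edge_valid H P L e1 -> edge_valid H P L e2 ->
    is_compact e1 -> is_compact e2 ->
    forall x, 0 <= x <= ell -> u e1 x = u e2 x.

(* Main.v *)
Require Import Defs.
From Stdlib Require Import Reals Lra Lia List.
From Coquelicot Require Import Coquelicot.
Open Scope R_scope.

Lemma int_not_ge (g1 g2 : R -> R) (eps : R) : 0 < eps ->
  ex_RInt_gen g1 (at_point 0) (Rbar_locally p_infty) ->
  ex_RInt_gen g2 (at_point 0) (Rbar_locally p_infty) ->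
  (forall x, 0 <= x -> eps <= g1 x + g2 x) -> False.
Proof.
  intros He [l1 H1] [l2 H2] Hg.
  assert (B1 := H1 (ball l1 1) (locally_ball l1 (mkposreal 1 Rlt_0_1))).
  assert (B2 := H2 (ball l2 1) (locally_ball l2 (mkposreal 1 Rlt_0_1))).
  destruct B1 as [Q1 R1 HQ1 HR1 P1]. destruct B2 as [Q2 R2 HQ2 HR2 P2].
  destruct HR1 as [M1 HM1]. destruct HR2 as [M2 HM2].
  set (b := Rmax 1 (Rmax (M1 + 1) (Rmax (M2 + 1) ((Rabs l1 + Rabs l2 + 3) / eps)))).
  assert (Hb1 : 1 <= b) by (unfold b; apply Rmax_l).
  assert (Hb2 : M1 + 1 <= b) by (unfold b; eapply Rle_trans; [|apply Rmax_r]; apply Rmax_l).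
  assert (Hb3 : M2 + 1 <= b) by (unfold b; eapply Rle_trans; [|apply Rmax_r]; eapply Rle_trans; [|apply Rmax_r]; apply Rmax_l).
  assert (Hb4 : (Rabs l1 + Rabs l2 + 3) / eps <= b) by (unfold b; eapply Rle_trans; [|apply Rmax_r]; eapply Rle_trans; [|apply Rmax_r]; apply Rmax_r).
  destruct (P1 0 b HQ1 (HM1 b ltac:(lra))) as [I1 [HI1 BI1]].
  destruct (P2 0 b HQ2 (HM2 b ltac:(lra))) as [I2 [HI2 BI2]].
  simpl in HI1, HI2.
  assert (HS := is_RInt_plus _ _ _ _ _ _ HI1 HI2).
  assert (HC := is_RInt_const 0 b eps).
  assert (Hle := is_RInt_le _ _ 0 b _ _ ltac:(lra) HC HS).
  assert (Hle' : scal (b - 0) eps <= plus I1 I2).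
  { apply Hle. intros x Hx. apply Hg. lra. }
  unfold scal, plus in Hle'; simpl in Hle'; unfold mult in Hle'; simpl in Hle'.
  change (Rabs (I1 - l1) < 1) in BI1. change (Rabs (I2 - l2) < 1) in BI2.
  apply Rabs_def2 in BI1. apply Rabs_def2 in BI2.
  assert (b * eps >= Rabs l1 + Rabs l2 + 3).
  { apply Rle_ge. apply (Rmult_le_compat_r eps) in Hb4; [|lra].
    unfold Rdiv in Hb4. rewrite Rmult_assoc, Rinv_l in Hb4; lra. }
  pose proof (Rle_abs l1). pose proof (Rle_abs l2). nra.
Qed.

Lemma nl_pos p v : 0 < v -> nl p v = exp ((p-2) * ln v) * v.
Proof. intros Hv. unfold nl, rpow. rewrite Rabs_pos_eq by lra.
  destruct (Rle_dec v 0); [lra|]. reflexivity. Qed.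

Lemma fF_pos p v : 0 < v -> fF p v = v^2/2 - exp (p * ln v) / p.
Proof. intros Hv. unfold fF, rpow. rewrite Rabs_pos_eq by lra.
  destruct (Rle_dec v 0); [lra|]. reflexivity. Qed.

Lemma exp_p_split p v : 0 < v -> exp (p * ln v) = exp ((p-2) * ln v) * v^2.
Proof. intros Hv. replace (p * ln v) with ((p-2) * ln v + ln v + ln v) by ring.
  rewrite !exp_plus, exp_ln by lra. ring. Qed.

Lemma loc_pos (v : R -> R) x : ex_derive v x -> 0 < v x -> locally x (fun t => 0 < v t).
Proof. intros Hd Hp. apply ex_derive_continuous in Hd.
  apply Hd. apply (open_gt 0 (v x) Hp). Qed.

Lemma energy_deriv p v x : 2 < p -> solves_ode p v x -> 0 < v x ->
  is_derive (fun t => -(1/2)*(Derive v t)^2 + fF p (v t)) x 0.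
Proof.
  intros Hp [H1 [H2 H3]] Hv.
  apply (is_derive_ext_loc (fun t => -(1/2)*(Derive v t)^2 + ((v t)^2/2 - exp (p * ln (v t)) / p))).
  { generalize (loc_pos v x H1 Hv). apply filter_imp. intros t Ht. rewrite fF_pos; auto. }
  auto_derive.
  - repeat split; auto.
  - rewrite nl_pos in H3 by auto.
    rewrite exp_p_split by auto.
    change (Derive (fun x0 => v x0)) with (Derive v).
    change (Derive (fun x0 => Derive v x0)) with (Derive (Derive v)).
    field_simplify; [|lra].
    set (K := exp ((p-2) * ln (v x))) in *.
    set (D := Derive v x) in *. set (DD := Derive (Derive v) x) in *.
    replace DD with (v x - K * v x) by lra. ring.
Qed.

Lemma cont_of_der g x l : is_derive g x l -> continuity_pt g x.
Proof. intros H. apply continuity_pt_filterlim. apply (ex_derive_continuous g x). exists l; auto. Qed.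

Lemma const_interval (g : R -> R) a b : a <= b ->
  (forall x, a <= x <= b -> is_derive g x 0) -> forall x, a <= x <= b -> g x = g a.
Proof.
  intros Hab Hd x Hx.
  destruct (MVT_gen g a x (fun _ => 0)) as [c [Hc Heq]].
  - intros y Hy. apply Hd. rewrite Rmin_left, Rmax_right in Hy; lra.
  - intros y Hy. apply (cont_of_der g y 0). apply Hd. rewrite Rmin_left, Rmax_right in Hy; lra.
  - lra.
Qed.

Definition Aof p := Rpower (p/2) (1/(p-2)).

Lemma ln_A p : 2 < p -> ln (Aof p) = ln (p/2) / (p-2).
Proof. intros Hp. unfold Aof, Rpower. rewrite ln_exp. field. lra. Qed.

Lemma A_pos p : 0 < Aof p.
Proof. unfold Aof, Rpower. apply exp_pos. Qed.

Lemma K_A p : 2 < p -> exp ((p-2) * ln (Aof p)) = p/2.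
Proof. intros Hp. rewrite ln_A by auto. replace ((p-2) * (ln (p/2) / (p-2))) with (ln (p/2)) by (field; lra).
  apply exp_ln. lra. Qed.

Lemma le_A p v : 2 < p -> 0 < v -> exp ((p-2) * ln v) <= p/2 -> v <= Aof p.
Proof.
  intros Hp Hv HK.
  assert (H1 : (p-2) * ln v <= ln (p/2)).
  { destruct (Rle_dec ((p-2) * ln v) (ln (p/2))) as [h|h]; auto.
    exfalso. apply Rnot_le_lt in h. apply exp_increasing in h. rewrite exp_ln in h; lra. }
  destruct (Rle_dec v (Aof p)) as [h|h]; auto. apply Rnot_le_lt in h.
  apply ln_increasing in h; [|apply A_pos]. rewrite ln_A in h by auto.
  exfalso. apply (Rmult_lt_compat_l (p-2)) in h; [|lra].
  replace ((p-2) * (ln (p/2) / (p-2))) with (ln (p/2)) in h by (field; lra). lra.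
Qed.

Lemma eq_A p v : 2 < p -> 0 < v -> exp ((p-2) * ln v) = p/2 -> v = Aof p.
Proof.
  intros Hp Hv HK.
  assert (H1 : (p-2) * ln v = ln (p/2)) by (rewrite <- HK, ln_exp; auto).
  rewrite <- (exp_ln v) by auto. unfold Aof, Rpower. f_equal.
  apply (Rmult_eq_reg_l (p-2)); [|lra]. rewrite H1. field. lra.
Qed.

Lemma fF_K p v : 2 < p -> 0 < v -> fF p v = v^2 * (1/2 - exp ((p-2) * ln v) / p).
Proof. intros Hp Hv. rewrite fF_pos, exp_p_split by auto. field. lra. Qed.

Lemma fF_ge0_le_A p v : 2 < p -> 0 < v -> 0 <= fF p v -> v <= Aof p.
Proof.
  intros Hp Hv Hf. rewrite fF_K in Hf by auto. apply le_A; auto.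
  assert (0 < v^2) by (apply pow_lt; auto).
  assert (0 <= 1/2 - exp ((p-2) * ln v) / p).
  { destruct (Rle_dec 0 (1/2 - exp ((p-2) * ln v) / p)); auto. nra. }
  apply (Rmult_le_compat_l p) in H0; [|lra]. field_simplify in H0; [|lra]. lra.
Qed.

Lemma fF_0_eq_A p v : 2 < p -> 0 < v -> fF p v = 0 -> v = Aof p.
Proof.
  intros Hp Hv Hf. rewrite fF_K in Hf by auto. apply eq_A; auto.
  assert (0 < v^2) by (apply pow_lt; auto).
  assert (1/2 - exp ((p-2) * ln v) / p = 0).
  { apply Rmult_integral in Hf. destruct Hf; auto. lra. }
  apply (Rmult_eq_compat_l p) in H0. field_simplify in H0; lra.
Qed.

Lemma fF_A p : 2 < p -> fF p (Aof p) = 0.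
Proof. intros Hp. rewrite fF_K by (auto; apply A_pos). rewrite K_A by auto. field. lra. Qed.

Lemma nl_A p : 2 < p -> nl p (Aof p) = p/2 * Aof p.
Proof. intros Hp. rewrite nl_pos by apply A_pos. rewrite K_A; auto. Qed.
Definition cc p := (p-2)/2.
Definition Tf p x := (exp (cc p * x) - exp (-(cc p * x))) / (exp (cc p * x) + exp (-(cc p * x))).

Lemma chpos p x : 0 < exp (cc p * x) + exp (-(cc p * x)).
Proof. pose proof (exp_pos (cc p * x)); pose proof (exp_pos (-(cc p * x))); lra. Qed.

Lemma e1e2 p x : exp (cc p * x) * exp (-(cc p * x)) = 1.
Proof. rewrite <- exp_plus. replace (cc p * x + - (cc p * x)) with 0 by ring. apply exp_0. Qed.

Lemma phi_exp p x : phi p x = Aof p * exp (-(2/(p-2)) * ln ((exp (cc p * x) + exp (-(cc p * x)))/2)).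
Proof.
  unfold phi, Aof. f_equal. unfold Rpower. f_equal. unfold cosh.
  rewrite ln_Rinv. unfold cc. ring_simplify. replace ((p-2)/2*x) with ((p-2)*x/2) by field. reflexivity.
  pose proof (chpos p x). unfold cc in H. replace ((p-2)*x/2) with ((p-2)/2*x) by field. lra.
Qed.

Lemma phi_pos p x : 0 < phi p x.
Proof. rewrite phi_exp. apply Rmult_lt_0_compat; [apply A_pos|apply exp_pos]. Qed.

Lemma phi_deriv p x : 2 < p -> is_derive (phi p) x (- Tf p x * phi p x).
Proof.
  intros Hp. eapply is_derive_ext. { intros t. symmetry. apply phi_exp. }
  rewrite phi_exp. pose proof (chpos p x). unfold Tf. unfold cc in *.
  auto_derive.
  - lra.
  - unfold Rdiv in *. set (E1 := exp ((p - 2) * / 2 * x)) in *.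
    set (E2 := exp (- ((p - 2) * / 2 * x))) in *.
    set (EE := exp (- (2 * / (p - 2)) * ln ((E1 + E2) * / 2))). field. split; lra.
Qed.

Lemma T_deriv p x : is_derive (Tf p) x (cc p * (1 - Tf p x ^ 2)).
Proof.
  unfold Tf. pose proof (chpos p x). unfold cc in *. auto_derive.
  - lra.
  - field. lra.
Qed.

Lemma T_sq p x : 1 - Tf p x ^ 2 = 4 / (exp (cc p * x) + exp (-(cc p * x)))^2.
Proof. unfold Tf. pose proof (chpos p x). pose proof (e1e2 p x).
  set (e1 := exp (cc p * x)) in *. set (e2 := exp (-(cc p * x))) in *.
  transitivity (4 * (e1 * e2) / (e1 + e2)^2). field; lra. rewrite H0. field; lra. Qed.

Lemma K_phi p x : 2 < p -> exp ((p-2) * ln (phi p x)) = p/2 * (1 - Tf p x ^ 2).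
Proof.
  intros Hp. rewrite T_sq. rewrite phi_exp. pose proof (chpos p x).
  set (S := exp (cc p * x) + exp (-(cc p * x))) in *.
  rewrite ln_mult by (apply A_pos || apply exp_pos). rewrite ln_exp, ln_A by auto.
  replace ((p-2) * (ln (p/2) / (p-2) + -(2/(p-2)) * ln (S/2))) with (ln (p/2) + (-2) * ln (S/2)) by (field; lra).
  rewrite exp_plus, exp_ln by lra.
  replace ((-2) * ln (S/2)) with (- (ln (S/2) + ln (S/2))) by ring.
  rewrite <- ln_mult by lra. rewrite exp_Ropp, exp_ln by nra. field. lra.
Qed.

Lemma nl_phi p x : 2 < p -> nl p (phi p x) = p/2 * (1 - Tf p x ^ 2) * phi p x.
Proof. intros Hp. rewrite nl_pos by apply phi_pos. rewrite K_phi; auto. Qed.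

Lemma fF_phi p x : 2 < p -> 2 * fF p (phi p x) = (Tf p x * phi p x)^2.
Proof. intros Hp. rewrite fF_K by (auto; apply phi_pos). rewrite K_phi by auto. field. lra. Qed.

Lemma phi_shift_deriv p y x : 2 < p ->
  is_derive (fun t => phi p (t + y)) x (- Tf p (x + y) * phi p (x + y)).
Proof.
  intros Hp. replace (- Tf p (x + y) * phi p (x + y)) with (scal 1 (- Tf p (x + y) * phi p (x + y))).
  2:{ unfold scal; simpl; unfold mult; simpl; ring. }
  apply (is_derive_comp (phi p) (fun t => t + y)). apply phi_deriv; auto.
  auto_derive; auto; ring.
Qed.

Lemma phi_shift_ode p y x : 2 < p -> solves_ode p (fun t => phi p (t + y)) x.
Proof.
  intros Hp.
  assert (HD : forall t, Derive (fun t => phi p (t + y)) t = - Tf p (t + y) * phi p (t + y)).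
  { intros t. apply is_derive_unique. apply phi_shift_deriv; auto. }
  assert (HDD : is_derive (fun t => - Tf p (t + y) * phi p (t + y)) x
     (- (cc p * (1 - Tf p (x+y) ^ 2)) * phi p (x+y) + (- Tf p (x+y)) * (- Tf p (x + y) * phi p (x + y)))).
  { apply (is_derive_mult (fun t => - Tf p (t + y)) (fun t => phi p (t + y))).
    - apply (is_derive_opp (fun t => Tf p (t + y))).
      replace (cc p * (1 - Tf p (x+y) ^ 2)) with (scal 1 (cc p * (1 - Tf p (x+y) ^ 2))).
      2:{ unfold scal; simpl; unfold mult; simpl; ring. }
      apply (is_derive_comp (Tf p) (fun t => t + y)). apply T_deriv. auto_derive; auto; ring.
    - apply phi_shift_deriv; auto.
    - intros; unfold mult; simpl; ring. }
  split; [|split].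
  - eexists; apply phi_shift_deriv; auto.
  - eapply ex_derive_ext. { intros t. symmetry. apply HD. } eexists; apply HDD.
  - rewrite (Derive_ext _ _ x HD). erewrite is_derive_unique; [|exact HDD].
    rewrite nl_phi by auto. unfold cc. field.
Qed.

Lemma T_pos p x : 2 < p -> 0 < x -> 0 < Tf p x.
Proof. intros Hp Hx. unfold Tf. pose proof (chpos p x). apply Rdiv_lt_0_compat; auto.
  assert (-(cc p * x) < cc p * x) by (unfold cc; nra). apply exp_increasing in H0. lra. Qed.

Lemma T_odd p x : Tf p (- x) = - Tf p x.
Proof. unfold Tf. replace (cc p * - x) with (-(cc p * x)) by ring. rewrite Ropp_involutive.
  pose proof (chpos p x). field. lra. Qed.

Lemma phi_even p x : phi p (- x) = phi p x.
Proof. rewrite !phi_exp. replace (cc p * - x) with (-(cc p * x)) by ring. rewrite Ropp_involutive.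
  rewrite (Rplus_comm (exp (- _))). reflexivity. Qed.

Lemma phi_le_A p x : 2 < p -> phi p x <= Aof p.
Proof. intros Hp. apply fF_ge0_le_A; auto. apply phi_pos.
  pose proof (fF_phi p x Hp). nra. Qed.

Lemma phi_0 p : 2 < p -> phi p 0 = Aof p.
Proof. intros Hp. rewrite phi_exp. rewrite Rmult_0_r, Ropp_0, exp_0.
  replace ((1+1)/2) with 1 by field. rewrite ln_1, Rmult_0_r, exp_0. ring. Qed.

Lemma phi_lt_A p x : 2 < p -> 0 < x -> phi p x < Aof p.
Proof. intros Hp Hx. destruct (Rle_lt_or_eq_dec _ _ (phi_le_A p x Hp)); auto.
  exfalso. assert (fF p (phi p x) = 0) by (rewrite e; apply fF_A; auto).
  pose proof (fF_phi p x Hp). pose proof (T_pos p x Hp Hx). pose proof (phi_pos p x).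
  rewrite H in H0. assert (0 < Tf p x * phi p x) by (apply Rmult_lt_0_compat; auto). nra. Qed.

Lemma phi_inv p z : 2 < p -> 0 < z -> z <= Aof p -> exists y, 0 <= y /\ phi p y = z.
Proof.
  intros Hp Hz HzA.
  pose proof (A_pos p) as HA.
  set (w := exp (-((p-2)/2) * ln (z / Aof p))).
  assert (Hw : 1 <= w).
  { unfold w. rewrite <- exp_0. 
    assert (ln (z / Aof p) <= 0).
    { rewrite <- ln_1. apply ln_le. apply Rdiv_lt_0_compat; auto.
      apply (Rmult_le_reg_r (Aof p)); auto. unfold Rdiv; rewrite Rmult_assoc, Rinv_l; lra. }
    destruct (Rle_lt_or_eq_dec 0 (-((p-2)/2) * ln (z / Aof p))). nra.
    left; apply exp_increasing; auto. right; rewrite e; auto. }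
  set (s := sqrt (w^2 - 1)).
  assert (Hs : 0 <= s) by apply sqrt_pos.
  assert (Hs2 : s * s = w^2 - 1) by (apply sqrt_sqrt; nra).
  set (t := ln (w + s)).
  assert (Ht : 0 <= t) by (unfold t; rewrite <- ln_1; apply ln_le; lra).
  exists (t / cc p). split.
  { unfold cc. apply Rdiv_le_0_compat; lra. }
  rewrite phi_exp. replace (cc p * (t / cc p)) with t by (unfold cc; field; lra).
  assert (E1 : exp t = w + s) by (apply exp_ln; lra).
  assert (E2 : exp (- t) = w - s).
  { rewrite exp_Ropp, E1. field_simplify_eq. nra. lra. }
  rewrite E1, E2. replace ((w + s + (w - s)) / 2) with w by field.
  unfold w. rewrite ln_exp.
  replace (- (2 / (p - 2)) * (- ((p - 2) / 2) * ln (z / Aof p))) with (ln (z / Aof p)) by (field; lra).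
  rewrite exp_ln. field. lra. apply Rdiv_lt_0_compat; auto.
Qed.

Lemma nl_lip p K a b : 2 < p -> 0 < a <= K -> 0 < b <= K ->
  Rabs (nl p a - nl p b) <= (p-1) * exp ((p-2) * ln K) * Rabs (a - b).
Proof.
  intros Hp Ha Hb.
  set (g := fun t => exp ((p-2) * ln t) * t).
  assert (Hg : forall t, 0 < t -> is_derive g t ((p-1) * exp ((p-2) * ln t))).
  { intros t Ht. unfold g. auto_derive. lra. field_simplify_eq. 
    replace (((p-2)*t+t)) with ((p-1)*t) by ring. reflexivity. lra. }
  assert (Hmin : 0 < Rmin b a) by (apply Rmin_glb_lt; lra).
  destruct (MVT_gen g b a (fun t => (p-1) * exp ((p-2) * ln t))) as [c [Hc Heq]].
  - intros x Hx. apply Hg. lra.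
  - intros x Hx. apply (cont_of_der g x _ (Hg x ltac:(lra))).
  - rewrite nl_pos, nl_pos by lra. fold (g a) (g b). rewrite Heq.
    assert (Hcmax : c <= K) by (assert (Rmax b a <= K) by (apply Rmax_lub; lra); lra).
    rewrite Rabs_mult. apply Rmult_le_compat_r; [apply Rabs_pos|].
    rewrite Rabs_pos_eq by (pose proof (exp_pos ((p-2) * ln c)); nra).
    apply Rmult_le_compat_l; [lra|].
    destruct (Rle_lt_or_eq_dec _ _ Hcmax) as [h|h]; [|rewrite h; lra].
    left. apply exp_increasing. apply Rmult_lt_compat_l; [lra|]. apply ln_increasing; lra.
Qed.

Lemma ode_uniq p K u v : 2 < p -> 0 < K ->
  (forall x, 0 <= x -> solves_ode p u x /\ solves_ode p v x /\ 0 < u x <= K /\ 0 < v x <= K) ->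
  u 0 = v 0 -> Derive u 0 = Derive v 0 -> forall x, 0 <= x -> u x = v x.
Proof.
  intros Hp HK Hs H0 H0' X HX.
  set (Lp := (p-1) * exp ((p-2) * ln K)).
  assert (HLp : 0 < Lp) by (unfold Lp; pose proof (exp_pos ((p-2) * ln K)); nra).
  set (C := 2 + Lp).
  set (Q := fun t => (u t - v t)^2 + (Derive u t - Derive v t)^2).
  set (R := fun t => Q t * exp (- C * t)).
  set (dQ := fun t => 2 * (u t - v t) * (Derive u t - Derive v t)
      + 2 * (Derive u t - Derive v t) * (Derive (Derive u) t - Derive (Derive v) t)).
  assert (HR : forall t, 0 <= t -> is_derive R t (exp (- C * t) * (dQ t - C * Q t))).
  { intros t Ht. destruct (Hs t Ht) as [[U1 [U2 U3]] [[V1 [V2 V3]] _]].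
    unfold R, Q, dQ. auto_derive.
    - repeat split; auto.
    - change (Derive (fun x => u x)) with (Derive u).
      change (Derive (fun x => v x)) with (Derive v).
      change (Derive (fun x => Derive u x)) with (Derive (Derive u)).
      change (Derive (fun x => Derive v x)) with (Derive (Derive v)). ring. }
  assert (HdQ : forall t, 0 <= t -> dQ t <= C * Q t).
  { intros t Ht. destruct (Hs t Ht) as [[U1 [U2 U3]] [[V1 [V2 V3]] [Hu Hv]]].
    pose proof (nl_lip p K (u t) (v t) Hp Hu Hv) as HL. fold Lp in HL.
    unfold dQ, Q, C.
    set (w := u t - v t) in *. set (w' := Derive u t - Derive v t).
    set (N := nl p (u t) - nl p (v t)) in *.
    replace (Derive (Derive u) t - Derive (Derive v) t) with (w - N) by (unfold w, N; lra).
    assert (A1 : - w' * N <= Rabs w' * Rabs N).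
    { rewrite <- Rabs_mult. pose proof (Rle_abs (-(w' * N))) as HH. rewrite Rabs_Ropp in HH. lra. }
    assert (A2 : Rabs w' * Rabs N <= Rabs w' * (Lp * Rabs w)) by (apply Rmult_le_compat_l; [apply Rabs_pos|auto]).
    assert (A3 : 2 * Rabs w' * Rabs w <= w'^2 + w^2).
    { rewrite <- (pow2_abs w'), <- (pow2_abs w). pose proof (pow2_ge_0 (Rabs w' - Rabs w)). nra. }
    assert (A4 : 0 <= Rabs w' * Rabs w) by (apply Rmult_le_pos; apply Rabs_pos).
    assert (A5 : Lp * (2 * Rabs w' * Rabs w) <= Lp * (w'^2 + w^2)) by (apply Rmult_le_compat_l; lra).
    pose proof (pow2_ge_0 (w - w')). nra. }
  assert (HR0 : R 0 = 0).
  { unfold R, Q. rewrite H0, H0'. ring. }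
  destruct (Rle_lt_or_eq_dec 0 X HX) as [HXp|HX0]; [|subst X; auto].
  destruct (MVT_gen R 0 X (fun t => exp (- C * t) * (dQ t - C * Q t))) as [c [Hc Heq]].
  - intros x Hx. apply HR. rewrite Rmin_left in Hx; lra.
  - intros x Hx. rewrite Rmin_left, Rmax_right in Hx by lra. eapply cont_of_der. apply HR. lra.
  - rewrite Rmin_left, Rmax_right in Hc by lra.
    assert (Hneg : exp (- C * c) * (dQ c - C * Q c) <= 0).
    { pose proof (exp_pos (- C * c)). pose proof (HdQ c ltac:(lra)). nra. }
    assert (HRX : R X <= 0) by nra.
    unfold R in HRX. pose proof (exp_pos (- C * X)).
    assert (HQX : Q X <= 0) by nra.
    unfold Q in HQX. pose proof (pow2_ge_0 (u X - v X)). pose proof (pow2_ge_0 (Derive u X - Derive v X)).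
    nra.
Qed.

Lemma loc_interval a b x (P : R -> Prop) : a < x < b -> (forall y, a < y < b -> P y) -> locally x P.
Proof.
  intros Hx HP.
  assert (He : 0 < Rmin (x - a) (b - x)) by (apply Rmin_glb_lt; lra).
  exists (mkposreal _ He). intros y Hy. apply HP.
  change (Rabs (y - x) < Rmin (x - a) (b - x)) in Hy.
  apply Rabs_def2 in Hy. pose proof (Rmin_l (x - a) (b - x)). pose proof (Rmin_r (x - a) (b - x)). lra.
Qed.

Lemma deriv_zero_side (h : R -> R) x l d : 0 < d -> is_derive h x l ->
  ((forall t, x <= t <= x + d -> h t = 0) \/ (forall t, x - d <= t <= x -> h t = 0)) -> l = 0.
Proof.
  intros Hd Hh Hz. apply is_derive_Reals in Hh.
  destruct (Req_dec l 0) as [|Hl]; auto. exfalso.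
  assert (Hal : 0 < Rabs l) by (apply Rabs_pos_lt; auto).
  destruct (Hh (Rabs l) Hal) as [del Hdel].
  assert (Hm : 0 < Rmin del d) by (apply Rmin_glb_lt; [apply cond_pos|lra]).
  pose proof (Rmin_l del d). pose proof (Rmin_r del d).
  destruct Hz as [Hz|Hz].
  - specialize (Hdel (Rmin del d / 2) ltac:(lra)).
    rewrite Rabs_pos_eq in Hdel by lra. specialize (Hdel ltac:(lra)).
    rewrite (Hz x), (Hz (x + Rmin del d / 2)) in Hdel by lra.
    replace ((0 - 0) / (Rmin del d / 2) - l) with (- l) in Hdel by (field; lra).
    rewrite Rabs_Ropp in Hdel. lra.
  - specialize (Hdel (- (Rmin del d / 2)) ltac:(lra)).
    rewrite Rabs_Ropp, Rabs_pos_eq in Hdel by lra. specialize (Hdel ltac:(lra)).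
    rewrite (Hz x), (Hz (x + - (Rmin del d / 2))) in Hdel by lra.
    replace ((0 - 0) / - (Rmin del d / 2) - l) with (- l) in Hdel by (field; lra).
    rewrite Rabs_Ropp in Hdel. lra.
Qed.

Lemma Derive_eq_side f g x d : 0 < d -> ex_derive f x -> ex_derive g x ->
  ((forall t, x <= t <= x + d -> f t = g t) \/ (forall t, x - d <= t <= x -> f t = g t)) ->
  Derive f x = Derive g x.
Proof.
  intros Hd Hf Hg Hfg.
  assert (H := is_derive_minus f g x _ _ (Derive_correct f x Hf) (Derive_correct g x Hg)).
  assert (minus (Derive f x) (Derive g x) = 0).
  { apply (deriv_zero_side (fun t => minus (f t) (g t)) x _ d Hd H).
    destruct Hfg as [Hfg|Hfg]; [left|right]; intros t Ht; rewrite Hfg by auto;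
    unfold minus, plus, opp; simpl; ring. }
  unfold minus, plus, opp in H0; simpl in H0. lra.
Qed.

Lemma deriv_min (v : R -> R) m l d : 0 < d -> is_derive v m l ->
  (forall t, m - d <= t <= m + d -> v m <= v t) -> l = 0.
Proof.
  intros Hd Hv Hmin. apply is_derive_Reals in Hv.
  destruct (Req_dec l 0) as [|Hl]; auto. exfalso.
  assert (Hal : 0 < Rabs l) by (apply Rabs_pos_lt; auto).
  destruct (Hv (Rabs l) Hal) as [del Hdel].
  assert (Hm : 0 < Rmin del d) by (apply Rmin_glb_lt; [apply cond_pos|lra]).
  pose proof (Rmin_l del d). pose proof (Rmin_r del d).
  set (e := Rmin del d / 2) in *.
  destruct (Rlt_dec 0 l) as [Hlp|Hlp].
  - specialize (Hdel (- e) ltac:(unfold e; lra)).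
    rewrite Rabs_Ropp, Rabs_pos_eq in Hdel by (unfold e; lra). specialize (Hdel ltac:(unfold e; lra)).
    assert (Hq : v m <= v (m + - e)) by (apply Hmin; unfold e; lra).
    assert (Hq2 : (v (m + - e) - v m) / - e <= 0).
    { unfold Rdiv. apply Rmult_le_0_l; [lra|]. left. apply Rinv_lt_0_compat. unfold e; lra. }
    rewrite Rabs_pos_eq in Hal by lra.
    apply Rabs_def2 in Hdel. rewrite Rabs_pos_eq in Hdel by lra. lra.
  - specialize (Hdel e ltac:(unfold e; lra)).
    rewrite Rabs_pos_eq in Hdel by (unfold e; lra). specialize (Hdel ltac:(unfold e; lra)).
    assert (Hq : v m <= v (m + e)) by (apply Hmin; unfold e; lra).
    assert (Hq2 : 0 <= (v (m + e) - v m) / e).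
    { unfold Rdiv. apply Rmult_le_pos; [lra|]. left. apply Rinv_0_lt_compat. unfold e; lra. }
    rewrite Rabs_left in Hal by lra.
    apply Rabs_def2 in Hdel. rewrite Rabs_left in Hdel by lra. lra.
Qed.

Definition En p v x := -(1/2) * (Derive v x)^2 + fF p (v x).

Lemma En_const p v a b : 2 < p -> a <= b ->
  (forall x, a <= x <= b -> solves_ode p v x /\ 0 < v x) ->
  forall x, a <= x <= b -> En p v x = En p v a.
Proof.
  intros Hp Hab H. apply (const_interval (En p v) a b Hab).
  intros x Hx. destruct (H x Hx). apply energy_deriv; auto.
Qed.

Lemma halfline_E0 p u : 2 < p ->
  (forall x, 0 <= x -> solves_ode p u x /\ 0 < u x) ->
  ex_RInt_gen (fun x => (u x)^2) (at_point 0) (Rbar_locally p_infty) ->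
  ex_RInt_gen (fun x => (Derive u x)^2) (at_point 0) (Rbar_locally p_infty) ->
  forall x, 0 <= x -> En p u x = 0.
Proof.
  intros Hp Hs I1 I2.
  assert (Hc : forall x, 0 <= x -> En p u x = En p u 0).
  { intros x Hx. apply (En_const p u 0 x Hp Hx). intros t Ht. apply Hs. lra. lra. }
  assert (E0 : En p u 0 = 0).
  { destruct (Req_dec (En p u 0) 0) as [|Hne]; auto. exfalso.
    assert (Hab : 0 < Rabs (En p u 0)) by (apply Rabs_pos_lt; auto).
    set (eps := Rmin 1 (Rabs (En p u 0) / 2)).
    assert (Heps : 0 < eps) by (apply Rmin_glb_lt; lra).
    apply (int_not_ge _ _ eps Heps I1 I2).
    intros x Hx. destruct (Rle_dec eps ((u x)^2 + (Derive u x)^2)) as [h|h]; auto. exfalso.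
    apply Rnot_le_lt in h. destruct (Hs x Hx) as [_ Hu].
    pose proof (Rmin_l 1 (Rabs (En p u 0) / 2)) as Hm1. pose proof (Rmin_r 1 (Rabs (En p u 0) / 2)) as Hm2.
    fold eps in Hm1, Hm2.
    pose proof (pow2_ge_0 (Derive u x)).
    assert (Hu1 : u x < 1) by nra.
    assert (HK : exp ((p-2) * ln (u x)) < 1).
    { rewrite <- exp_0. apply exp_increasing. assert (ln (u x) < 0) by (rewrite <- ln_1; apply ln_increasing; lra). nra. }
    pose proof (exp_pos ((p-2) * ln (u x))).
    assert (Hb : Rabs (En p u x) <= (u x)^2 + (Derive u x)^2).
    { unfold En. rewrite fF_K by auto. apply Rabs_le.
      assert (0 < (u x)^2) by (apply pow_lt; auto).
      assert (0 <= exp ((p - 2) * ln (u x)) / p <= 1/2).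
      { split. apply Rdiv_le_0_compat; lra. apply (Rmult_le_reg_l p); [lra|]. field_simplify; lra. }
      split; nra. }
    rewrite (Hc x Hx) in Hb. lra. }
  intros x Hx. rewrite Hc; auto.
Qed.

Lemma compact_no_A p ell v : 2 < p -> 0 < ell ->
  (forall x, 0 <= x <= ell -> solves_ode p v x /\ 0 < v x) ->
  v 0 = Aof p -> Derive v 0 = 0 -> Derive v ell = 0 -> False.
Proof.
  intros Hp Hell Hs Hv0 Hd0 Hdl.
  assert (HE : forall x, 0 <= x <= ell -> En p v x = 0).
  { intros x Hx. rewrite (En_const p v 0 ell Hp ltac:(lra) Hs x Hx).
    unfold En. rewrite Hv0, Hd0, fF_A by auto. ring. }
  assert (Hle : forall x, 0 <= x <= ell -> v x <= Aof p).
  { intros x Hx. destruct (Hs x Hx). apply fF_ge0_le_A; auto.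
    pose proof (HE x Hx). unfold En in H1. pose proof (pow2_ge_0 (Derive v x)). lra. }
  assert (HeqA : forall x, 0 <= x <= ell -> Derive v x = 0 -> v x = Aof p).
  { intros x Hx Hd. destruct (Hs x Hx). apply fF_0_eq_A; auto.
    pose proof (HE x Hx). unfold En in H1. rewrite Hd in H1. lra. }
  destruct (continuity_ab_min v 0 ell ltac:(lra)) as [m [Hm Hmr]].
  { intros c Hc. destruct (Hs c Hc) as [[H1 _] _]. destruct H1 as [l Hl]. apply (cont_of_der v c l Hl). }
  assert (HvmA : v m = Aof p).
  { destruct (Req_dec m 0) as [->|Hm0]; auto.
    destruct (Req_dec m ell) as [->|Hml]. apply HeqA; auto; lra.
    apply HeqA; auto.
    destruct (Hs m Hmr) as [[H1 _] _].
    set (d := Rmin (m - 0) (ell - m)).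
    assert (Hd : 0 < d) by (apply Rmin_glb_lt; lra).
    apply (deriv_min v m _ d Hd (Derive_correct v m H1)).
    intros t Ht. pose proof (Rmin_l (m - 0) (ell - m)). pose proof (Rmin_r (m - 0) (ell - m)). fold d in H, H0.
    apply Hm. lra. }
  assert (HcA : forall x, 0 <= x <= ell -> v x = Aof p).
  { intros x Hx. apply Rle_antisym. apply Hle; auto. rewrite <- HvmA. apply Hm; auto. }
  assert (HD : forall x, 0 < x < ell -> Derive v x = 0).
  { intros x Hx. apply is_derive_unique. apply (is_derive_ext_loc (fun _ => Aof p)).
    apply (loc_interval 0 ell); auto. intros y Hy. symmetry. apply HcA. lra.
    auto_derive; auto. }
  assert (HDD : Derive (Derive v) (ell/2) = 0).
  { rewrite (Derive_ext_loc (Derive v) (fun _ => 0)). apply Derive_const.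
    apply (loc_interval 0 ell); [lra|]. intros y Hy. apply HD; auto. }
  destruct (Hs (ell/2) ltac:(lra)) as [[_ [_ Hode]] _].
  rewrite HDD, HcA, nl_A in Hode by (auto; lra). pose proof (A_pos p). nra.
Qed.

Lemma fold_ext (f g : nat -> R) l : (forall i, In i l -> f i = g i) ->
  fold_right Rplus 0 (map f l) = fold_right Rplus 0 (map g l).
Proof. induction l; simpl; intros H; auto. rewrite H by auto. rewrite IHl; auto. Qed.

Lemma rsum_ext n f g : (forall i, (i < n)%nat -> f i = g i) -> rsum n f = rsum n g.
Proof. intros H. unfold rsum. apply fold_ext. intros i Hi. apply in_seq in Hi. apply H. lia. Qed.

Lemma fold_const c l : fold_right Rplus 0 (map (fun _ : nat => c) l) = INR (length l) * c.
Proof. induction l; simpl; [ring|]. rewrite IHl. destruct (length l); simpl; ring. Qed.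

Lemma rsum_const n c : rsum n (fun _ => c) = INR n * c.
Proof. unfold rsum. rewrite fold_const, length_seq. auto. Qed.

Lemma fold_sign (s : nat -> bool) a b l :
  fold_right Rplus 0 (map (fun i => if s i then a else b) l) =
  INR (length (filter s l)) * a + (INR (length l) - INR (length (filter s l))) * b.
Proof. induction l; cbn [map fold_right filter length]; [simpl; ring|]. rewrite IHl. destruct (s a0); cbn [filter length]; rewrite ?S_INR; ring. Qed.

Lemma rsum_sign (s : nat -> bool) a b n :
  rsum n (fun i => if s i then a else b) =
  INR (length (filter s (seq 0 n))) * a + (INR n - INR (length (filter s (seq 0 n)))) * b.
Proof. unfold rsum. rewrite fold_sign, length_seq. auto. Qed.

Theorem lemma2p1 (p ell : R) (H P L : nat) (u : edge -> R -> R) :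
  2 < p -> 0 < ell -> (1 <= H)%nat -> (1 <= P + L)%nat ->
  is_bound_state p ell H P L u -> is_positive ell H P L u -> core_symmetric ell H P L u ->
  exists y, 0 < y /\
  exists s : nat -> bool,
    (forall i, (i < H)%nat ->
       if s i then (forall x, 0 <= x -> u (Half i) x = phi p (x + y))
       else (forall x, 0 <= x -> u (Half i) x = phi p (x - y))) /\
    let Hp := length (filter s (seq 0 H)) in
    let Hm := (H - Hp)%nat in
    let theta := (INR Hp - INR Hm) / INR (P + 2 * L) in
    let z := phi p y in
    (0 < z < Rpower (p / 2) (1 / (p - 2))) /\
    (forall e, edge_valid H P L e -> is_compact e ->
       (forall x, 0 <= x <= ell -> solves_ode p (u e) x) /\
       u e 0 = z /\
       Derive (u e) 0 = theta * sqrt (2 * fF p z) /\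
       Derive (u e) ell = 0 /\
       (forall x, 0 <= x <= ell ->
          - (1 / 2) * (Derive (u e) x) ^ 2 + fF p (u e x) = (1 - theta ^ 2) * fF p z)).
Proof.
  intros Hp Hell HH HPL Hbs Hpos Hcs.
  destruct Hbs as [Hode [Hint [Hcont [Hkir [Hpend [Hloop _]]]]]].
  assert (V0 : edge_valid H P L (Half 0)) by (simpl; lia).
  set (z := u (Half 0) 0).
  assert (Hhs : forall i, (i < H)%nat -> forall x, 0 <= x -> solves_ode p (u (Half i)) x /\ 0 < u (Half i) x).
  { intros i Hi x Hx. split; [apply Hode|apply Hpos]; simpl; auto. }
  assert (HE : forall i, (i < H)%nat -> forall x, 0 <= x -> En p (u (Half i)) x = 0).
  { intros i Hi. destruct (Hint i Hi). apply halfline_E0; auto. }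
  assert (Hh0 : forall i, (i < H)%nat -> u (Half i) 0 = z).
  { intros i Hi. apply Hcont; simpl; auto. }
  assert (Hz : 0 < z) by (apply Hpos; simpl; auto; lra).
  assert (HzA : z <= Aof p).
  { apply fF_ge0_le_A; auto. pose proof (HE 0%nat ltac:(lia) 0 ltac:(lra)). unfold En in H0.
    fold z in H0. pose proof (pow2_ge_0 (Derive (u (Half 0)) 0)). lra. }
  destruct (phi_inv p z Hp Hz HzA) as [y [Hy Hphy]].
  assert (He0 : exists e0, edge_valid H P L e0 /\ is_compact e0).
  { destruct (Nat.eq_dec P 0) as [HP0|HP0].
    - exists (LoopE 0 false). simpl. split; auto. lia.
    - exists (Pend 0). simpl. split; auto. lia. }
  destruct He0 as [e0 [Ve0 Ce0]].
  assert (Hcomp : forall e, edge_valid H P L e -> is_compact e -> forall x, 0 <= x <= ell ->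
     solves_ode p (u e) x /\ 0 < u e x).
  { intros e Ve Ce x Hx. split; [apply Hode|apply Hpos]; auto; destruct e; simpl in *; tauto. }
  assert (Hc0 : forall e, edge_valid H P L e -> u e 0 = z).
  { intros e Ve. apply Hcont; auto. }
  set (d := Derive (u e0) 0).
  assert (HcD : forall e, edge_valid H P L e -> is_compact e -> Derive (u e) 0 = d).
  { intros e Ve Ce. unfold d. apply (Derive_eq_side _ _ 0 ell Hell).
    - apply (Hcomp e Ve Ce 0 ltac:(lra)).
    - apply (Hcomp e0 Ve0 Ce0 0 ltac:(lra)).
    - left. intros t Ht. apply Hcs; auto. lra. }
  assert (HcDl : forall e, edge_valid H P L e -> is_compact e -> Derive (u e) ell = 0).
  { intros e Ve Ce. destruct e as [i|i|j b]; simpl in Ce, Ve.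
    - contradiction.
    - apply Hpend; auto.
    - destruct (Hloop j Ve) as [_ Hs].
      assert (Heq : Derive (u (LoopE j false)) ell = Derive (u (LoopE j true)) ell).
      { apply (Derive_eq_side _ _ ell ell Hell).
        - apply (Hcomp (LoopE j false) Ve I ell ltac:(lra)).
        - apply (Hcomp (LoopE j true) Ve I ell ltac:(lra)).
        - right. intros t Ht. apply Hcs; simpl; auto. lra. }
      destruct b; lra. }
  assert (HP2L : 1 <= INR P + 2 * INR L).
  { assert (1 <= INR (P + L)) by (apply (le_INR 1); lia). rewrite plus_INR in H0.
    pose proof (pos_INR L). lra. }
  set (SH := rsum H (fun i => Derive (u (Half i)) 0)).
  assert (Hkir' : SH + (INR P + 2 * INR L) * d = 0).
  { rewrite <- Hkir. unfold SH.
    rewrite (rsum_ext P _ (fun _ => d)), (rsum_ext L _ (fun _ => d + d)).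
    rewrite !rsum_const. ring.
    - intros j Hj. rewrite !HcD; simpl; auto.
    - intros i Hi. rewrite HcD; simpl; auto. }
  set (w := Tf p y * phi p y).
  assert (HDsq : forall i, (i < H)%nat -> (Derive (u (Half i)) 0)^2 = w^2).
  { intros i Hi. pose proof (HE i Hi 0 ltac:(lra)). unfold En in H0. rewrite Hh0 in H0 by auto.
    unfold w. rewrite <- fF_phi, Hphy by auto. lra. }
  assert (Hypos : 0 < y).
  { destruct (Rle_lt_or_eq_dec 0 y Hy) as [|Hy0]; auto. exfalso. subst y.
    rewrite phi_0 in Hphy by auto.
    assert (Hw0 : w = 0) by (unfold w, Tf; rewrite Rmult_0_r, Ropp_0; unfold Rdiv; ring).
    assert (SH = 0).
    { unfold SH. rewrite (rsum_ext H _ (fun _ => 0)). rewrite rsum_const; ring.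
      intros i Hi. pose proof (HDsq i Hi). rewrite Hw0 in H0. nra. }
    assert (Hd0 : d = 0) by nra.
    apply (compact_no_A p ell (u e0) Hp Hell (Hcomp e0 Ve0 Ce0)).
    - rewrite Hc0; auto.
    - fold d. auto.
    - apply HcDl; auto. }
  assert (Hwpos : 0 < w) by (unfold w; apply Rmult_lt_0_compat; [apply T_pos|apply phi_pos]; auto).
  set (s := fun i => if Rlt_dec (Derive (u (Half i)) 0) 0 then true else false).
  assert (HDi : forall i, (i < H)%nat -> Derive (u (Half i)) 0 = if s i then - w else w).
  { intros i Hi. pose proof (HDsq i Hi). unfold s. destruct (Rlt_dec (Derive (u (Half i)) 0) 0); nra. }
  exists y. split; auto. exists s. split.
  { intros i Hi. pose proof (HDi i Hi) as HD. 
    assert (Hub : forall x, 0 <= x -> 0 < u (Half i) x <= Aof p).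
    { intros x Hx. destruct (Hhs i Hi x Hx). split; auto. apply fF_ge0_le_A; auto.
      pose proof (HE i Hi x Hx). unfold En in H2. pose proof (pow2_ge_0 (Derive (u (Half i)) x)). lra. }
    destruct (s i).
    - intros x Hx. apply (ode_uniq p (Aof p) (u (Half i)) (fun t => phi p (t + y)) Hp (A_pos p)); auto.
      + intros t Ht. split; [apply Hhs; auto|]. split; [apply phi_shift_ode; auto|]. split; auto.
        split; [apply phi_pos|apply phi_le_A; auto].
      + rewrite Hh0, Rplus_0_l; auto.
      + rewrite HD. symmetry. apply is_derive_unique.
        unfold w. replace (- (Tf p y * phi p y)) with (- Tf p (0 + y) * phi p (0 + y)) by (rewrite Rplus_0_l; ring).
        apply phi_shift_deriv; auto.
    - intros x Hx. unfold Rminus. apply (ode_uniq p (Aof p) (u (Half i)) (fun t => phi p (t + - y)) Hp (A_pos p)); auto.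
      + intros t Ht. split; [apply Hhs; auto|]. split; [apply phi_shift_ode; auto|]. split; auto.
        split; [apply phi_pos|apply phi_le_A; auto].
      + rewrite Hh0, Rplus_0_l, phi_even; auto.
      + rewrite HD. symmetry. apply is_derive_unique.
        unfold w. replace (Tf p y * phi p y) with (- Tf p (0 + - y) * phi p (0 + - y))
          by (rewrite Rplus_0_l, T_odd, phi_even; ring).
        apply phi_shift_deriv; auto. }
  intros Hpn Hm theta zz.
  assert (Hsq : sqrt (2 * fF p zz) = w).
  { unfold zz. rewrite fF_phi by auto. apply sqrt_pow2. lra. }
  assert (HSH : SH = INR Hpn * (- w) + (INR H - INR Hpn) * w).
  { unfold SH. rewrite (rsum_ext H _ (fun i => if s i then - w else w)) by auto. apply rsum_sign. }
  assert (HHm : INR Hm = INR H - INR Hpn).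
  { unfold Hm. apply minus_INR. unfold Hpn. rewrite <- (length_seq H 0) at 2. apply filter_length_le. }
  assert (HPL2 : INR (P + 2 * L) = INR P + 2 * INR L) by (rewrite plus_INR, mult_INR; simpl; ring).
  assert (Hdval : d = theta * w).
  { unfold theta. rewrite HHm, HPL2. rewrite HSH in Hkir'. field_simplify_eq; [|lra]. nra. }
  split.
  { unfold zz. split; [apply phi_pos|]. apply phi_lt_A; auto. }
  intros e Ve Ce. split; [|split; [|split; [|split]]].
  - intros x Hx. apply Hcomp; auto.
  - rewrite Hc0; auto.
  - rewrite HcD, Hsq; auto.
  - apply HcDl; auto.
  - intros x Hx. change (En p (u e) x = (1 - theta ^ 2) * fF p zz).
    rewrite (En_const p (u e) 0 ell Hp ltac:(lra) (Hcomp e Ve Ce) x Hx).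
    unfold En. rewrite HcD, Hc0, Hdval by auto. fold zz.
    assert (Hw2 : w^2 = 2 * fF p zz) by (unfold zz, w; rewrite fF_phi; auto).
    replace ((theta * w)^2) with (theta^2 * w^2) by ring. rewrite Hw2. rewrite <- Hphy. fold zz. set (F := fF p zz) in *. set (T2 := theta ^ 2) in *. lra.
Qed.
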